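(* Consider a smooth and decomposable probabilistic circuit defining $p(\mathbf{y}\mid\mathcal{Q},\mathcal{X})$ for every forecasting query $\mathcal{Q}$ and observation set $\mathcal{X}$, such that: (1) each leaf node is a distribution over exactly the variables $\mathbf{y}_c$ of the queries belonging to a single input channel $c$; (2) each leaf distribution over $\mathbf{y}_c$ depends on the query only through the subset $\mathcal{Q}_c$ of queries belonging to channel $c$ (and on $\mathcal{X}$); (3) the weights of the sum nodes do not depend on the query $\mathcal{Q}$ (they may depend on $\mathcal{X}$). Then for every channel $c$, $$\int p(\mathbf{y}\mid\mathcal{Q},\mathcal{X})\,d\mathbf{y}_c=p(\mathbf{y}_{-c}\mid\mathcal{Q}_{-c},\mathcal{X}),$$ where $\mathbf{y}_{-c}=\mathbf{y}\setminus\mathbf{y}_c$ and $\mathcal{Q}_{-c}=\mathcal{Q}\setminus\mathcal{Q}_c$; i.e. the circuit is marginalization consistent up to the leaf nodes (with respect to removing whole channels).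
   Context: Observations $\mathcal{X}=((t_n,c_n,y_n))_{n=1}^N$ with $(t_n,c_n,y_n)\in\mathbb{R}\times\{1,\dots,C\}\times\mathbb{R}$; a query $\mathcal{Q}=((t_m^{\mathrm{qry}},c_m^{\mathrm{qry}}))_{m}$ with targets $\mathbf{y}$. For channel $c$, $\mathcal{Q}_c$ denotes the queries with channel index $c$ and $\mathbf{y}_c$ the corresponding targets; the sets $\mathbf{y}_c$ partition $\mathbf{y}$. A probabilistic circuit is a rooted DAG with leaf nodes (normalized densities over a subset of variables, its scope), sum nodes computing $\sum_{k\in ch(n)}w_{n,k}p_k$ with $w_{n,k}\ge 0$, $\sum_k w_{n,k}=1$, and product nodes computing $\prod_{k\in ch(n)}p_k$; the scope of an inner node is the union of its children's scopes. Smoothness: all children of a sum node have the same scope. Decomposability: children of a product node have pairwise disjoint scopes. The circuit structure is fixed and does not depend on $\mathcal{Q}$; when $\mathcal{Q}_c$ is empty the leaves of channel $c$ are the constant $1$. *)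

(* Defs.v *)
From Stdlib Require List.
From HB Require Import structures.
From mathcomp Require Import all_boot all_order all_algebra.
From mathcomp Require Import all_classical all_reals all_analysis.
Set Implicit Arguments. Unset Strict Implicit. Unset Printing Implicit Defensive.
Import Order.TTheory GRing.Theory Num.Theory.
Local Open Scope ring_scope.

Section PC.
Variables (R : realType) (C : nat).

(* observations X = ((t_n, c_n, y_n))_n, channels {1..C} rendered as 'I_C *)
Definition obs := seq (R * 'I_C * R).
Definition query := seq (R * 'I_C).

Definition qchan (Q : query) (c : 'I_C) : query := [seq q <- Q | q.2 == c].
Definition qrest (Q : query) (c : 'I_C) : query := [seq q <- Q | q.2 != c].

(* y_c : the targets (in query order) of the queries of channel c;
   y is a sequence of targets aligned with Q *)
Definition yvals (Q : query) (y : seq R) (c : 'I_C) : seq R :=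
  [seq p.2 | p <- zip Q y & p.1.2 == c].

(* A probabilistic circuit whose structure is fixed (independent of Q).
   - a leaf carries a single channel c (its scope is y_c) and a family of
     functions  f X ts yc  = density of y_c given X and Q_c, where Q_c is
     given through its sequence of query times ts (all its channels are c);
   - a sum node carries its children with weights w X depending only on X;
   - a product node carries its children. *)
Inductive pc : Type :=
| PLeaf of 'I_C & (obs -> seq R -> seq R -> R)
| PSum of seq ((obs -> R) * pc)
| PProd of seq pc.

Fixpoint pc_eval (X : obs) (Q : query) (y : seq R) (n : pc) {struct n} : R :=
  match n with
  | PLeaf c f => f X [seq q.1 | q <- qchan Q c] (yvals Q y c)
  | PSum ch => (fix go (l : seq ((obs -> R) * pc)) : R :=
                  match l with
                  | [::] => 0
                  | (w, k) :: l' => w X * pc_eval X Q y k + go l'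
                  end) ch
  | PProd ch => (fix go (l : seq pc) : R :=
                   match l with
                   | [::] => 1
                   | k :: l' => pc_eval X Q y k * go l'
                   end) ch
  end.

(* scope, as a set of channels (the variable scope for a query Q is the
   union of the y_c for c in this set) *)
Fixpoint scope (n : pc) : {set 'I_C} :=
  match n with
  | PLeaf c _ => [set c]
  | PSum ch => (fix go (l : seq ((obs -> R) * pc)) : {set 'I_C} :=
                  match l with
                  | [::] => finset.set0
                  | (_, k) :: l' => scope k :|: go l'
                  end) ch
  | PProd ch => (fix go (l : seq pc) : {set 'I_C} :=
                   match l with
                   | [::] => finset.set0
                   | k :: l' => scope k :|: go l'
                   end) ch
  end.

Fixpoint all_nodes (P : pc -> Prop) (n : pc) {struct n} : Prop :=
  P n /\
  match n with
  | PLeaf _ _ => True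
  | PSum ch => (fix go (l : seq ((obs -> R) * pc)) : Prop :=
                  match l with
                  | [::] => True
                  | (_, k) :: l' => all_nodes P k /\ go l'
                  end) ch
  | PProd ch => (fix go (l : seq pc) : Prop :=
                   match l with
                   | [::] => True
                   | k :: l' => all_nodes P k /\ go l'
                   end) ch
  end.

Definition smooth : pc -> Prop := all_nodes (fun n =>
  match n with
  | PSum ch => forall k1 k2, List.In k1 (map snd ch) -> List.In k2 (map snd ch) ->
                 scope k1 = scope k2
  | _ => True
  end).

Definition decomposable : pc -> Prop := all_nodes (fun n =>
  match n with
  | PProd ch => forall (i j : nat) (k1 k2 : pc), i <> j ->
                 List.nth_error ch i = Some k1 -> List.nth_error ch j = Some k2 ->
                 [disjoint scope k1 & scope k2]
  | _ => True
  end).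

Fixpoint iint (n : nat) : (n.-tuple R -> \bar R) -> \bar R :=
  match n return (n.-tuple R -> \bar R) -> \bar R with
  | 0 => fun f => f [tuple]
  | n'.+1 => fun f =>
      (\int[@lebesgue_measure R]_x iint (fun t : n'.-tuple R => f [tuple of x :: t]))%E
  end.

(* Every leaf is a normalized density over its variables y_c, for every X and
   every Q_c (given by its times ts); for ts = [::] this forces the value 1. *)
Definition leaves_are_densities : pc -> Prop := all_nodes (fun n =>
  match n with
  | PLeaf _ f => forall (X : obs) (ts : seq R),
      (forall v : (size ts).-tuple R, 0 <= f X ts v) /\
      measurable_fun [set: (size ts).-tuple R] (fun v : (size ts).-tuple R => f X ts v) /\
      iint (fun v : (size ts).-tuple R => (f X ts v)%:E) = 1%E
  | _ => True
  end).

Definition sum_weights_valid : pc -> Prop := all_nodes (fun n =>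
  match n with
  | PSum ch => forall X : obs,
      (forall wk, List.In wk ch -> 0 <= wk.1 X) /\ \sum_(wk <- ch) wk.1 X = 1
  | _ => True
  end).

(* rebuild y (aligned with Q) from y_c (in order) and y_{-c} (in order) *)
Fixpoint ymerge (c : 'I_C) (Q : query) (yc ys : seq R) : seq R :=
  match Q with
  | [::] => [::]
  | q :: Q' => if q.2 == c then head 0 yc :: ymerge c Q' (behead yc) ys
               else head 0 ys :: ymerge c Q' yc (behead ys)
  end.

End PC.

(* Main.v *)
Require Import Defs.
From HB Require Import structures.
From mathcomp Require Import all_boot all_order all_algebra.
From mathcomp Require Import all_classical all_reals all_analysis.
From mathcomp Require Import measurable_realfun.
Set Implicit Arguments. Unset Strict Implicit. Unset Printing Implicit Defensive.
Import Order.TTheory GRing.Theory Num.Theory.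
Local Open Scope ring_scope.
Local Open Scope ereal_scope.

Section S.
Variable R : realType.

Lemma iint_ge0 n (f : n.-tuple R -> \bar R) : (forall v, 0 <= f v) -> 0 <= iint f.
Proof.
elim: n f => [|n IH] f f0 /=; first exact: f0.
by apply: integral_ge0 => x _; apply: IH.
Qed.

Lemma iint_meas n : forall d (T : measurableType d) (h : T * n.-tuple R -> \bar R),
  measurable_fun setT h -> (forall z, 0 <= h z) ->
  measurable_fun setT (fun x => iint (fun t => h (x, t))).
Proof.
elim: n => [|n IH] d T h mh h0 /=.
  apply: measurableT_comp => //; exact: measurable_fun_pair.
pose h' := fun w : (T * R) * n.-tuple R => h (w.1.1, [tuple of w.1.2 :: w.2]).
have mh' : measurable_fun setT h'.
  apply: measurableT_comp => //; apply: measurable_fun_pair.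
    exact: measurableT_comp.
  apply: measurable_cons => //; exact: measurableT_comp.
have := IH _ _ h' mh' (fun z => h0 _).
move=> mF.
have := measurable_fun_fubini_tonelli_F (m2 := @lebesgue_measure R) _ mF.
apply.
move=> z; apply: iint_ge0 => v; exact: h0.
Qed.

Lemma meas_sec n (f : n.+1.-tuple R -> \bar R) : measurable_fun setT f ->
  forall x : R, measurable_fun setT (fun t : n.-tuple R => f [tuple of x :: t]).
Proof.
move=> mf x; apply: measurableT_comp => //; exact: measurable_cons.
Qed.

Lemma meas_iint_sec n (f : n.+1.-tuple R -> \bar R) : measurable_fun setT f ->
  (forall v, 0 <= f v) ->
  measurable_fun setT (fun x : R => iint (fun t : n.-tuple R => f [tuple of x :: t])).
Proof.
move=> mf f0.
have := @iint_meas n _ R (fun z => f [tuple of z.1 :: z.2]).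
apply => //; apply: measurableT_comp => //; exact: measurable_cons.
Qed.

Lemma iintD n (f g : n.-tuple R -> \bar R) :
  measurable_fun setT f -> measurable_fun setT g ->
  (forall v, 0 <= f v) -> (forall v, 0 <= g v) ->
  iint (fun v => f v + g v) = iint f + iint g.
Proof.
elim: n f g => [|n IH] f g mf mg f0 g0 //=.
transitivity (\int[@lebesgue_measure R]_x (iint (fun t : n.-tuple R => f [tuple of x :: t]) + iint (fun t : n.-tuple R => g [tuple of x :: t]))).
  apply: eq_integral => x _; apply: IH => //; exact: meas_sec.
apply: ge0_integralD => //.
- by move=> x _; apply: iint_ge0.
- exact: meas_iint_sec.
- by move=> x _; apply: iint_ge0.
- exact: meas_iint_sec.
Qed.

Lemma iintZ n (k : R) (f : n.-tuple R -> \bar R) : (0 <= k)%R ->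
  measurable_fun setT f -> (forall v, 0 <= f v) ->
  iint (fun v => k%:E * f v) = k%:E * iint f.
Proof.
elim: n f => [|n IH] f k0 mf f0 //=.
transitivity (\int[@lebesgue_measure R]_x (k%:E * iint (fun t : n.-tuple R => f [tuple of x :: t]))).
  apply: eq_integral => x _; apply: IH => //; exact: meas_sec.
apply: ge0_integralZl_EFin => //.
- by move=> x _; apply: iint_ge0.
- exact: meas_iint_sec.
Qed.
Lemma iint0 n : iint (fun _ : n.-tuple R => 0) = 0.
Proof.
elim: n => [|n IH] //=.
transitivity (\int[@lebesgue_measure R]_x (0 : \bar R)).
  by apply: eq_integral => x _; rewrite IH.
exact: integral0.
Qed.
End S.
Section T.
Local Open Scope ring_scope.
Variables (R : realType) (C : nat).
Implicit Types (Q : query R C) (c : 'I_C).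

Lemma pc_ind' (P : pc R C -> Prop)
  (HL : forall c f, P (PLeaf c f))
  (HS : forall ch, (forall wk, List.In wk ch -> P wk.2) -> P (PSum ch))
  (HP : forall ch, (forall k, List.In k ch -> P k) -> P (PProd ch)) :
  forall n, P n.
Proof.
fix IH 1; case=> [c f|ch|ch].
- exact: HL.
- apply: HS; elim: ch => [|[w k] l IHl] wk /=; first by case.
  case=> [<-|H]; first exact: IH. exact: IHl.
- apply: HP; elim: ch => [|k l IHl] kk /=; first by case.
  case=> [<-|H]; first exact: IH. exact: IHl.
Qed.

Lemma all_nodes_sum (P : pc R C -> Prop) ch : all_nodes P (PSum ch) ->
  P (PSum ch) /\ forall wk, List.In wk ch -> all_nodes P wk.2.
Proof.
move=> /= [H1 H2]; split => //; clear H1.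
elim: ch H2 => [|[w k] l IHl] //= [H3 H4] wk [<-|H] //; exact: IHl.
Qed.

Lemma all_nodes_prod (P : pc R C -> Prop) ch : all_nodes P (PProd ch) ->
  P (PProd ch) /\ forall k, List.In k ch -> all_nodes P k.
Proof.
move=> /= [H1 H2]; split => //; clear H1.
elim: ch H2 => [|k l IHl] //= [H3 H4] k' [<-|H] //; exact: IHl.
Qed.

Lemma scope_sumP c (ch : seq ((obs R C -> R) * pc R C)) : c \in scope (PSum ch) <-> exists wk, List.In wk ch /\ c \in scope wk.2.
Proof.
elim: ch => [|[w k] l IHl] /=; first by rewrite inE; split => // -[? []].
rewrite finset.in_setU; split.
  case/orP => [H|/IHl [wk [H1 H2]]]; first by exists (w, k); split => //; left.
  by exists wk; split => //; right.
move=> [wk [[<-|H1] H2]]; first by rewrite H2.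
by apply/orP; right; apply/IHl; exists wk.
Qed.

Lemma scope_prodP c (ch : seq (pc R C)) : c \in scope (PProd ch) <-> exists k, List.In k ch /\ c \in scope k.
Proof.
elim: ch => [|k l IHl] /=; first by rewrite inE; split => // -[? []].
rewrite finset.in_setU; split.
  case/orP => [H|/IHl [k' [H1 H2]]]; first by exists k; split => //; left.
  by exists k'; split => //; right.
move=> [k' [[<-|H1] H2]]; first by rewrite H2.
by apply/orP; right; apply/IHl; exists k'.
Qed.

Lemma In_map_snd (A B : Type) (x : A * B) l : List.In x l -> List.In x.2 (map snd l).
Proof. by elim: l => [|y l IH] //= [<-|H]; [left|right; exact: IH]. Qed.

Lemma yvals_merge_c c Q yc ymc : size yc = size (qchan Q c) ->
  yvals Q (ymerge c Q yc ymc) c = yc.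
Proof.
rewrite /yvals /qchan.
elim: Q yc ymc => [|q Q IH] yc ymc /=; first by case: yc.
case: ifP => Hq /=.
  case: yc => [|a yc] //= [Hs]; rewrite Hq /=; congr (_ :: _); exact: IH.
by move=> Hs; rewrite Hq; exact: IH.
Qed.

Lemma yvals_merge_other c c' Q yc ymc : c' != c -> size ymc = size (qrest Q c) ->
  yvals Q (ymerge c Q yc ymc) c' = yvals (qrest Q c) ymc c'.
Proof.
rewrite /yvals /qrest => Hc.
elim: Q yc ymc => [|[t cq] Q IH] yc ymc /=; first by case: ymc.
case: (eqVneq cq c) => Hq.
  rewrite Hq /= eq_sym (negbTE Hc) => Hs; exact: IH.
rewrite /=.
case: ymc => [|b ymc] //= [Hs].
by case: ifP => _ /=; rewrite IH.
Qed.

Lemma qchan_rest c c' Q : c' != c -> qchan (qrest Q c) c' = qchan Q c'.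
Proof.
rewrite /qchan /qrest => Hc; elim: Q => [|[t cq] Q IH] //=.
case: (eqVneq cq c) => Hq /=; last by rewrite IH.
by rewrite Hq eq_sym (negbTE Hc) IH.
Qed.

Lemma qchan_rest_same c Q : qchan (qrest Q c) c = [::].
Proof.
rewrite /qchan /qrest; elim: Q => [|[t cq] Q IH] //=.
by case: (eqVneq cq c) => Hq //=; rewrite (negbTE Hq).
Qed.

Lemma yvals_rest_same c Q y : yvals (qrest Q c) y c = [::].
Proof.
rewrite /yvals /qrest; elim: Q y => [|[t cq] Q IH] y; first by case: y.
case: (eqVneq cq c) => Hq /=; first by rewrite Hq eqxx; exact: IH.
rewrite Hq /=; case: y => [|b y] //=.
by rewrite (negbTE Hq).
Qed.

Lemma size_yvals c Q y : size y = size Q -> size (yvals Q y c) = size (qchan Q c).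
Proof.
rewrite /yvals /qchan; elim: Q y => [|q Q IH] [|b y] //= [Hs].
by case: ifP => _ /=; rewrite IH.
Qed.

Lemma size_ymerge c Q yc ymc : size (ymerge c Q yc ymc) = size Q.
Proof. by elim: Q yc ymc => [|q Q IH] yc ymc //=; case: ifP => _ /=; rewrite IH. Qed.

End T.

Section Main.
Variables (R : realType) (C : nat).
Local Open Scope ring_scope.

Lemma eval_sum_cons X Q y (w : obs R C -> R) (k : pc R C) l :
  pc_eval X Q y (PSum ((w, k) :: l)) = w X * pc_eval X Q y k + pc_eval X Q y (PSum l).
Proof. by []. Qed.
Lemma eval_prod_cons X Q y (k : pc R C) l :
  pc_eval X Q y (PProd (k :: l)) = pc_eval X Q y k * pc_eval X Q y (PProd l).
Proof. by []. Qed.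
Lemma scope_prod_cons (k : pc R C) l :
  scope (PProd (k :: l)) = scope k :|: scope (PProd l).
Proof. by []. Qed.

Lemma eval_ge0 X (Q : query R C) y (n : pc R C) : size y = size Q ->
  leaves_are_densities n -> sum_weights_valid n -> 0 <= pc_eval X Q y n.
Proof.
move=> Hy; elim/pc_ind': n => [c' f|ch IH|ch IH] HL HW.
- case: HL => HL _ /=.
  set ts := [seq q.1 | q <- qchan Q c'].
  have e : size (yvals Q y c') == size ts.
    rewrite /ts size_map; exact/eqP/size_yvals.
  exact: ((HL X ts).1 (Tuple e)).
- have [_ HLc] := all_nodes_sum HL.
  have [HWt HWc] := all_nodes_sum HW.
  have [Hw0 _] := HWt X.
  elim: ch IH HLc HWc Hw0 {HL HW HWt} => [|[w k] l IHl] IH HLc HWc Hw0; first by rewrite /= lexx.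
  rewrite eval_sum_cons; apply: addr_ge0.
    apply: mulr_ge0; first by apply: (Hw0 (w, k)); left.
    by apply: (IH (w, k)); [left|apply: (HLc (w,k)); left|apply: (HWc (w,k)); left].
  apply: IHl => wk Hin; [apply: IH|apply: HLc|apply: HWc|apply: Hw0]; by right.
- have [_ HLc] := all_nodes_prod HL.
  have [_ HWc] := all_nodes_prod HW.
  elim: ch IH HLc HWc {HL HW} => [|k l IHl] IH HLc HWc; first by rewrite /= ler01.
  rewrite eval_prod_cons; apply: mulr_ge0.
    by apply: IH; [left|apply: HLc; left|apply: HWc; left].
  apply: IHl => k' Hin; [apply: IH|apply: HLc|apply: HWc]; by right.
Qed.


Lemma meas_tr m n (g : seq R -> R) : m = n ->
  measurable_fun setT (fun v : m.-tuple R => g v) ->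
  measurable_fun setT (fun v : n.-tuple R => g v).
Proof. by move=> e; case: n / e. Qed.

Lemma iint_tr m n (g : seq R -> \bar R) : m = n ->
  iint (fun v : m.-tuple R => g v) = iint (fun v : n.-tuple R => g v).
Proof. by move=> e; case: n / e. Qed.

Variables (X : obs R C) (Q : query R C) (c : 'I_C) (ymc : seq R).
Hypothesis Hs : size ymc = size (qrest Q c).

Let n0 := size (qchan Q c).
Let F (n : pc R C) (yc : n0.-tuple R) : R := pc_eval X Q (ymerge c Q yc ymc) n.
Let G (n : pc R C) : R := pc_eval X (qrest Q c) ymc n.

Let Prop_n (n : pc R C) :=
  measurable_fun setT (F n) /\ (c \notin scope n -> forall yc, F n yc = G n) /\
  (c \in scope n -> iint (fun yc => (F n yc)%:E) = (G n)%:E).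

Let F_ge0 n yc : leaves_are_densities n -> sum_weights_valid n -> 0 <= F n yc.
Proof. by move=> HL HW; apply: eval_ge0 => //; rewrite size_ymerge. Qed.

Let G_ge0 n : leaves_are_densities n -> sum_weights_valid n -> 0 <= G n.
Proof. by move=> HL HW; apply: eval_ge0. Qed.

Let measE n : measurable_fun setT (F n) -> measurable_fun setT (fun yc => (F n yc)%:E).
Proof. by move=> mf; apply/measurable_EFinP. Qed.

Lemma leaf_case c' f : leaves_are_densities (PLeaf c' f) -> Prop_n (PLeaf c' f).
Proof.
case=> HL _.
case: (eqVneq c' c) => Hc.
- subst c'.
  set ts := [seq q.1 | q <- qchan Q c].
  have ets : size ts = n0 by rewrite size_map.
  have FE : F (PLeaf c f) = fun yc : n0.-tuple R => f X ts yc.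
    by apply: funext => yc; rewrite /F /= yvals_merge_c // size_tuple.
  have GE : G (PLeaf c f) = 1.
    rewrite /G /= qchan_rest_same yvals_rest_same.
    by have [_ [_ H]] := HL X [::]; move: H => /= [].
  split; last split.
  + rewrite FE; apply: (meas_tr (g := f X ts) ets); exact: (HL X ts).2.1.
  + by rewrite /scope inE eqxx.
  + move=> _; rewrite FE GE -(iint_tr (fun v => (f X ts v)%:E) ets).
    exact: (HL X ts).2.2.
- have FE : forall yc, F (PLeaf c' f) yc = G (PLeaf c' f).
    move=> yc; rewrite /F /G /= qchan_rest // yvals_merge_other //.
  split; last split.
  + rewrite (_ : F _ = fun _ => G (PLeaf c' f)); last exact: funext.
    exact: measurable_cst.
  + by [].
  + by rewrite /scope inE eq_sym (negbTE Hc).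
Qed.


Lemma sum_list (l : seq ((obs R C -> R) * pc R C)) :
  (forall wk, List.In wk l -> Prop_n wk.2 /\ leaves_are_densities wk.2 /\
     sum_weights_valid wk.2 /\ 0 <= wk.1 X) ->
  (forall yc, 0 <= F (PSum l) yc) /\ measurable_fun setT (F (PSum l)) /\
  ((forall wk, List.In wk l -> c \notin scope wk.2) -> forall yc, F (PSum l) yc = G (PSum l)) /\
  ((forall wk, List.In wk l -> c \in scope wk.2) ->
     iint (fun yc => (F (PSum l) yc)%:E) = (G (PSum l))%:E).
Proof.
elim: l => [|[w k] l IHl] H.
  split; first by move=> yc; rewrite /F /= lexx.
  split; last split => //.
    rewrite (_ : F _ = fun _ => 0); last exact: funext.
    exact: measurable_cst.
  move=> _; rewrite (_ : (fun yc => _) = fun _ => 0%E); last exact: funext.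
  exact: iint0.
have [[mk [ck ik]] [hl [hw w0]]] := H (w, k) (or_introl erefl).
have [pl [ml [cl il]]] := IHl (fun wk Hin => H wk (or_intror Hin)).
have FE yc : F (PSum ((w, k) :: l)) yc = w X * F k yc + F (PSum l) yc by [].
have GE : G (PSum ((w, k) :: l)) = w X * G k + G (PSum l) by [].
split.
  move=> yc; rewrite FE; apply: addr_ge0 => //; apply: mulr_ge0 => //; exact: F_ge0.
split; last split.
- rewrite (_ : F _ = (fun yc => w X * F k yc) \+ F (PSum l)); last exact: funext.
  apply: measurable_funD => //; apply: measurable_funM => //; exact: measurable_cst.
- move=> Hn yc; rewrite FE GE ck ?cl //; first by move=> wk Hin; apply: Hn; right.
  by apply: (Hn (w, k)); left.
- move=> Hn.
  rewrite (_ : (fun yc => _) = fun yc => ((w X * F k yc)%:E + (F (PSum l) yc)%:E)%E);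
    last by apply: funext => yc; rewrite FE EFinD.
  rewrite iintD; first last.
  + by move=> v; rewrite lee_fin.
  + by move=> v; rewrite lee_fin; apply: mulr_ge0 => //; apply: F_ge0.
  + exact: measE.
  + apply/measurable_EFinP; apply: measurable_funM => //; exact: measurable_cst.
  rewrite (_ : (fun yc => _) = fun yc => ((w X)%:E * (F k yc)%:E)%E);
    last by apply: funext => yc; rewrite EFinM.
  rewrite iintZ //; first last.
  + by move=> v; rewrite lee_fin; apply: F_ge0.
  + exact: measE.
  rewrite ik; last by apply: (Hn (w, k)); left.
  rewrite il; last by move=> wk Hin; apply: Hn; right.
  by rewrite GE EFinD EFinM.
Qed.


Lemma prod_list (l : seq (pc R C)) :
  (forall k, List.In k l -> Prop_n k /\ leaves_are_densities k /\ sum_weights_valid k) ->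
  (forall (i j : nat) (k1 k2 : pc R C), i <> j ->
     List.nth_error l i = Some k1 -> List.nth_error l j = Some k2 ->
     [disjoint scope k1 & scope k2]) ->
  (forall yc, 0 <= F (PProd l) yc) /\ 0 <= G (PProd l) /\
  measurable_fun setT (F (PProd l)) /\
  ((forall k, List.In k l -> c \notin scope k) -> forall yc, F (PProd l) yc = G (PProd l)) /\
  (c \in scope (PProd l) -> iint (fun yc => (F (PProd l) yc)%:E) = (G (PProd l))%:E).
Proof.
elim: l => [|k l IHl] H D.
  split; first by move=> yc; rewrite /F /= ler01.
  split; first by rewrite /G /= ler01.
  split; last split => //; last by rewrite /= inE.
  rewrite (_ : F _ = fun _ => 1); last exact: funext.
  exact: measurable_cst.
have [[mk [ck ik]] [hl hw]] := H k (or_introl erefl).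
have [pl [gl [ml [cl il]]]] := IHl (fun k' Hin => H k' (or_intror Hin))
  (fun i j k1 k2 Hij H1 H2 => D i.+1 j.+1 k1 k2 (fun e => Hij (succn_inj e)) H1 H2).
have FE yc : F (PProd (k :: l)) yc = F k yc * F (PProd l) yc by [].
have GE : G (PProd (k :: l)) = G k * G (PProd l) by [].
split.
  move=> yc; rewrite FE; apply: mulr_ge0 => //; exact: F_ge0.
split; first by rewrite GE; apply: mulr_ge0 => //; exact: G_ge0.
split; last split.
- rewrite (_ : F _ = F k \* F (PProd l)); last exact: funext.
  exact: measurable_funM.
- move=> Hn yc; rewrite FE GE ck ?cl //; first by move=> k' Hin; apply: Hn; right.
  by apply: Hn; left.
- rewrite scope_prod_cons finset.in_setU => Hc.
  have [Hk|Hk] := boolP (c \in scope k).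
  + have Hnl : forall k2, List.In k2 l -> c \notin scope k2.
      move=> k2 Hin; have [j Hj] := List.In_nth_error _ _ Hin.
      have Hij : (0 <> j.+1)%coq_nat by move/eqP.
      by rewrite (disjointFr (D 0 j.+1 k k2 Hij erefl Hj) Hk).
    rewrite (_ : (fun yc => _) = fun yc => ((G (PProd l))%:E * (F k yc)%:E)%E);
      last by apply: funext => yc; rewrite FE cl // -EFinM mulrC.
    rewrite iintZ //; first last.
    * by move=> v; rewrite lee_fin; apply: F_ge0.
    * exact: measE.
    by rewrite ik // GE -EFinM mulrC.
  + have Hl : c \in scope (PProd l) by move: Hc; rewrite (negbTE Hk).
    rewrite (_ : (fun yc => _) = fun yc => ((G k)%:E * (F (PProd l) yc)%:E)%E);
      last by apply: funext => yc; rewrite FE ck // -EFinM.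
    rewrite iintZ //; first last.
    * exact: measE.
    * exact: G_ge0.
    by rewrite il // GE -EFinM.
Qed.


Lemma node_prop n : smooth n -> decomposable n -> leaves_are_densities n ->
  sum_weights_valid n -> Prop_n n.
Proof.
elim/pc_ind': n => [c' f|ch IH|ch IH] HS HD HL HW.
- exact: leaf_case.
- have [HSt HSc] := all_nodes_sum HS.
  have [_ HDc] := all_nodes_sum HD.
  have [_ HLc] := all_nodes_sum HL.
  have [HWt HWc] := all_nodes_sum HW.
  have [Hw0 _] := HWt X.
  have [_ [m [cst int]]] := @sum_list ch (fun wk Hin =>
    conj (IH wk Hin (HSc wk Hin) (HDc wk Hin) (HLc wk Hin) (HWc wk Hin))
      (conj (HLc wk Hin) (conj (HWc wk Hin) (Hw0 wk Hin)))).
  split => //; split.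
    move=> Hn; apply: cst => wk Hin; apply: contra Hn => Hc.
    by apply/scope_sumP; exists wk.
  move=> /scope_sumP [wk0 [Hin0 Hc0]]; apply: int => wk Hin.
  by rewrite (HSt wk.2 wk0.2 (In_map_snd Hin) (In_map_snd Hin0)).
- have [_ HSc] := all_nodes_prod HS.
  have [HDt HDc] := all_nodes_prod HD.
  have [_ HLc] := all_nodes_prod HL.
  have [_ HWc] := all_nodes_prod HW.
  have [_ [_ [m [cst int]]]] := @prod_list ch (fun k Hin =>
    conj (IH k Hin (HSc k Hin) (HDc k Hin) (HLc k Hin) (HWc k Hin))
      (conj (HLc k Hin) (HWc k Hin))) HDt.
  split => //; split => //.
  move=> Hn; apply: cst => k Hin; apply: contra Hn => Hc.
  by apply/scope_prodP; exists k.
Qed.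

End Main.

Unset Implicit Arguments.

Theorem lemmaA1 (R : realType) (C : nat) (p : pc R C)
  (Hsmooth : smooth p) (Hdec : decomposable p)
  (Hleaves : leaves_are_densities p) (Hweights : sum_weights_valid p)
  (Hroot : forall c : 'I_C, c \in scope p) :
  forall (X : obs R C) (Q : query R C) (c : 'I_C) (ymc : seq R),
    size ymc = size (qrest Q c) ->
    iint (fun yc : (size (qchan Q c)).-tuple R =>
            (pc_eval X Q (ymerge c Q yc ymc) p)%:E)
    = (pc_eval X (qrest Q c) ymc p)%:E.
Proof.
move=> X Q c ymc Hs.
have [_ [_ H]] := node_prop X Hs Hsmooth Hdec Hleaves Hweights.
exact: (H (Hroot c)).
Qed.
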